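(* Let $f:\mathcal{X}\times\mathcal{Y}\to\mathcal{V}=\{0,1,\dots,m-1\}$ and define $f_n^{\mathsf t}:\mathcal{X}^n\times\mathcal{Y}^n\to\mathcal{P}_n(\mathcal{V})$ by $f_n^{\mathsf t}(\mathbf{x},\mathbf{y})=P_{(f(x_1,y_1),\dots,f(x_n,y_n))}$ (the type of the sequence of symbol-wise values). Define $\hat f^{\mathsf t}:\mathcal{X}\times\mathcal{Y}\to\mathcal{V}\cup\{m\}$ by $\hat f^{\mathsf t}(x,y)=m$ if $f(x,\cdot)$ is constant on $\mathcal{Y}$, and $\hat f^{\mathsf t}(x,y)=f(x,y)$ otherwise. Then $f_n^{\mathsf t}$ is $\overline{\mathcal{X}}_{\hat f^{\mathsf t}}$-informative.
   Context: Finite alphabets $\mathcal{X},\mathcal{Y}$. The type of $\mathbf{s}\in\mathcal{S}^n$ is $P_{\mathbf{s}}(s)=|\{i:s_i=s\}|/n$; $\mathcal{P}_n(\mathcal{S})$ is the set of types of sequences in $\mathcal{S}^n$. For a function $g$ on $\mathcal{X}\times\mathcal{Y}$, $\overline{\mathcal{X}}_g$ is the partition of $\mathcal{X}$ in which $x,\hat x$ lie in the same cell iff $g(x,y)=g(\hat x,y)$ for all $y$. For a partition $\overline{\mathcal{X}}$ and $x\in\mathcal{X}$, $[x]_{\overline{\mathcal{X}}}$ is the cell containing $x$; $[\mathbf{x}]_{\overline{\mathcal{X}}}$ is applied componentwise. For $a\in\mathcal{X}$, $a\mathbf{x}^{(-i)}$ is $\mathbf{x}$ with its $i$th entry replaced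 by $a$; similarly $b\mathbf{y}^{(-i)}$. For a permutation $\sigma$ of $[1:n]$, $\sigma(\mathbf{x})$ has $i$th entry $x_{\sigma(i)}$. $f_n:\mathcal{X}^n\times\mathcal{Y}^n\to\mathcal{Z}_n$ is $\overline{\mathcal{X}}$-informative if (1) for each $i\in[1:n]$ there is a map $\xi_n^{(i)}:\mathcal{Z}_n^{|\mathcal{Y}|}\to\overline{\mathcal{X}}$ with $\xi_n^{(i)}\big((f_n(a\mathbf{x}^{(-i)},b\mathbf{y}^{(-i)}):b\in\mathcal{Y})\big)=[a]_{\overline{\mathcal{X}}}$ for all $a\in\mathcal{X}$, $(\mathbf{x},\mathbf{y})$; and (2) $f_n(\sigma(\mathbf{x}),\mathbf{y})=f_n(\mathbf{x},\mathbf{y})$ for all $(\mathbf{x},\mathbf{y})$ and all permutations $\sigma$ with $[\sigma(\mathbf{x})]_{\overline{\mathcal{X}}}=[\mathbf{x}]_{\overline{\mathcal{X}}}$. *)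

(* Defs.v *)
From HB Require Import structures.
From mathcomp Require Import all_boot all_order all_algebra all_fingroup.
Set Implicit Arguments. Unset Strict Implicit. Unset Printing Implicit Defensive.
Import GRing.Theory Num.Theory.

Definition type_of (V : finType) (n : nat) (s : 'I_n -> V) : {ffun V -> rat} :=
  [ffun v => (#|[set i | s i == v]|%:R / n%:R)%R].

Definition seq_eval (X Y V : Type) (n : nat) (g : X -> Y -> V)
  (x : {ffun 'I_n -> X}) (y : {ffun 'I_n -> Y}) : 'I_n -> V :=
  fun i => g (x i) (y i).

Definition fnt (X Y : finType) (m n : nat) (f : X -> Y -> 'I_m)
  (x : {ffun 'I_n -> X}) (y : {ffun 'I_n -> Y}) : {ffun 'I_m -> rat} :=
  type_of (seq_eval f x y).

Definition fhat (X Y : finType) (m : nat) (f : X -> Y -> 'I_m) (x : X) (y : Y) : 'I_m.+1 :=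
  if [forall y1 : Y, forall y2 : Y, f x y1 == f x y2] then ord_max
  else widen_ord (leqnSn m) (f x y).

(* Partition Xbar_g: x, x' in the same cell iff g(x,y) = g(x',y) for all y.
   cell g a = [a]_{Xbar_g}, the cell containing a. *)
Definition cell (X Y : finType) (W : eqType) (g : X -> Y -> W) (a : X) : {set X} :=
  [set x' | [forall y : Y, g a y == g x' y]].

Definition upd (T : Type) (n : nat) (x : {ffun 'I_n -> T}) (i : 'I_n) (a : T)
  : {ffun 'I_n -> T} := [ffun j => if j == i then a else x j].

Definition permseq (T : Type) (n : nat) (s : 'S_n) (x : {ffun 'I_n -> T})
  : {ffun 'I_n -> T} := [ffun i => x (s i)].

(* f_n is Xbar-informative, where the partition Xbar is given by its cell map
   cl : X -> {set X}, a |-> [a]_{Xbar}. *)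
Definition informative (X Y : finType) (Z : eqType) (n : nat)
  (fn : {ffun 'I_n -> X} -> {ffun 'I_n -> Y} -> Z) (cl : X -> {set X}) : Prop :=
  (forall i : 'I_n, exists xi : {ffun Y -> Z} -> {set X},
      forall (a : X) (x : {ffun 'I_n -> X}) (y : {ffun 'I_n -> Y}),
        xi [ffun b => fn (upd x i a) (upd y i b)] = cl a)
  /\
  (forall (x : {ffun 'I_n -> X}) (y : {ffun 'I_n -> Y}) (s : 'S_n),
      (forall i : 'I_n, cl (permseq s x i) = cl (x i)) ->
      fn (permseq s x) y = fn x y).

(* Main.v *)
Require Import Defs.
From HB Require Import structures.
From mathcomp Require Import all_boot all_order all_algebra all_fingroup.
Set Implicit Arguments. Unset Strict Implicit. Unset Printing Implicit Defensive.
Import GRing.Theory Num.Theory Order.TTheory.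

Definition Cst (X Y : finType) (m : nat) (f : X -> Y -> 'I_m) (a : X) : bool :=
  [forall y1 : Y, forall y2 : Y, f a y1 == f a y2].

Lemma fhat_eq (X Y : finType) (m : nat) (f : X -> Y -> 'I_m) (a a' : X) (y0 : Y) :
  (forall y, fhat f a y = fhat f a' y) ->
  Cst f a = Cst f a' /\ (~~ Cst f a -> forall y, f a y = f a' y).
Proof.
move=> H; have H0 := H y0; move: H0 H; rewrite /fhat -/(Cst f a) -/(Cst f a').
case: (Cst f a); case: (Cst f a') => //= H0 H.
- move/(congr1 val): H0 => /= E; have := ltn_ord (f a' y0); by rewrite -E ltnn.
- move/(congr1 val): H0 => /= E; have := ltn_ord (f a y0); by rewrite E ltnn.
- split=> // _ y; apply: val_inj; exact: (congr1 val (H y)).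
Qed.

Definition dec (Y : finType) (m : nat) (F : {ffun Y -> {ffun 'I_m -> rat}}) (b : Y)
  : 'I_m.+1 :=
  match [pick v : 'I_m | [exists b', (F b' v < F b v)%R]] with
  | Some v => widen_ord (leqnSn m) v
  | None => ord_max
  end.

Theorem proposition3 (X Y : finType) (m : nat) (f : X -> Y -> 'I_m) (n : nat) :
  informative (@fnt X Y m n f) (cell (fhat f)).
Proof.
split.
- move=> i.
  exists (fun F => [set x' | [forall y : Y, dec F y == fhat f x' y]]).
  move=> a x y.
  set F := [ffun b => _].
  have cnt : forall b v, #|[set j | seq_eval f (upd x i a) (upd y i b) j == v]|
      = ((f a b == v) + #|[set j | (j != i) && (f (x j) (y j) == v)]|)%N.
    move=> b v; rewrite (cardsD1 i) !inE /seq_eval !ffunE eqxx; congr (_ + _)%N.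
    apply: eq_card => j; rewrite !inE /seq_eval !ffunE.
    by case: (j =P i).
  have npos : (0 < n)%N by apply: leq_ltn_trans (ltn_ord i).
  have key : forall b b' v, (F b' v < F b v)%R = (f a b == v) && (f a b' != v).
    move=> b b' v; rewrite /F /fnt /type_of !ffunE !cnt.
    rewrite ltr_pM2r ?invr_gt0 ?ltr0n // ltr_nat ltn_add2r.
    by case: (f a b == v); case: (f a b' == v).
  have D : forall b, dec F b = fhat f a b.
    move=> b; rewrite /dec /fhat.
    case: pickP => [v /existsP [b' Hb'] | Hn].
      move: Hb'; rewrite key => /andP [/eqP Eb Eb'].
      have -> : [forall y1, forall y2, f a y1 == f a y2] = false.
        apply/negP => /forallP /(_ b) /forallP /(_ b'); by rewrite Eb eq_sym (negbTE Eb').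
      by rewrite Eb.
    have -> // : [forall y1, forall y2, f a y1 == f a y2].
    apply/forallP => y1; apply/forallP => y2; apply/negPn/negP => Hne.
    have [E1|E1] := eqVneq (f a b) (f a y1).
    + move: (Hn (f a b)) => /= /negbT /existsPn /(_ y2) /negP; apply.
      by rewrite key eqxx /= E1 eq_sym.
    + move: (Hn (f a b)) => /= /negbT /existsPn /(_ y1) /negP; apply.
      by rewrite key eqxx /= eq_sym.
  apply/setP => x'; rewrite !inE; apply: eq_forallb => b; by rewrite D.
- move=> x y s H.
  have HC : forall i, Cst f (x (s i)) = Cst f (x i) /\
     (~~ Cst f (x (s i)) -> forall b, f (x (s i)) b = f (x i) b).
    move=> i; apply: (@fhat_eq _ _ _ f _ _ (y i)) => b.
    have := H i; rewrite /permseq ffunE => Hc.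
    have : x i \in cell (fhat f) (x (s i)) by rewrite Hc inE; apply/forallP.
    by rewrite inE => /forallP /(_ b) /eqP.
  pose t i := if Cst f (x i) then s i else i.
  have claim : forall i, f (x (s i)) (y i) = f (x (t i)) (y (t i)).
    move=> i; rewrite /t; case Ci: (Cst f (x i)).
      have : Cst f (x (s i)) by rewrite (HC i).1.
      by move/forallP/(_ (y i))/forallP/(_ (y (s i)))/eqP.
    apply: (HC i).2; by rewrite (HC i).1 Ci.
  have tinj : injective t.
    move=> i j; rewrite /t.
    case Ci: (Cst f (x i)); case Cj: (Cst f (x j)) => //.
    + exact: perm_inj.
    + move=> E; move: Cj; by rewrite -E (HC i).1 Ci.
    + move=> E; move: Ci; by rewrite E (HC j).1 Cj.
  apply/ffunP => v; rewrite /fnt /type_of !ffunE; congr (_%:R / _)%R.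
  rewrite -[RHS](card_preimset _ tinj); apply: eq_card => j.
  by rewrite !inE /seq_eval /permseq !ffunE claim.
Qed.
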